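(* For positive integers $p,q$ and an integer $k\ge0$, $$G_{k+3}(p-1,q)+(-1)^kG_{k+3}(q-1,p)=\sum_{a+b=k}(-1)^b\,\zeta(\{1\}^{p-1},a+2)\,\zeta(\{1\}^{q-1},b+2),$$ where the sum is over nonnegative integers $a,b$ with $a+b=k$.
   Context: $\zeta(\alpha_1,\ldots,\alpha_r)=\sum_{1\le k_1<\cdots<k_r}k_1^{-\alpha_1}\cdots k_r^{-\alpha_r}$ for positive integers $\alpha_i$, $\alpha_r\ge2$; $\{a\}^k$ denotes $k$ repetitions of $a$. For nonnegative integers $n,p,q$, $$G_{n+2}(p,q)=\sum_{1\le k_1<\cdots<k_{p+1}}\frac{1}{k_1\cdots k_p\,k_{p+1}^{n+2}}\sum_{1\le \ell_1\le\cdots\le\ell_q\le k_{p+1}}\frac{1}{\ell_1\cdots\ell_q}.$$ *)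

(* Defs.v *)
From HB Require Import structures.
From mathcomp Require Import all_boot all_order all_algebra.
From mathcomp Require Import all_classical all_reals all_analysis.
Set Implicit Arguments. Unset Strict Implicit. Unset Printing Implicit Defensive.
Import Order.TTheory GRing.Theory Num.Theory.
Import numFieldNormedType.Exports.
Local Open Scope ring_scope.

(* mzvT_rev N [:: a_r; ...; a_1] =
     sum_{1 <= k_1 < ... < k_r <= N} k_1^{-a_1} ... k_r^{-a_r}
   (the exponent list is given in reverse order: last exponent first). *)
Fixpoint mzvT_rev (R : realType) (N : nat) (s : seq nat) : R :=
  match s with
  | [::] => 1
  | a :: s' => \sum_(1 <= k < N.+1) (k%:R ^- a) * mzvT_rev R k.-1 s'
  end.

Definition mzvT (R : realType) (N : nat) (s : seq nat) : R := mzvT_rev R N (rev s).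

Definition mzv (R : realType) (s : seq nat) : R := limn (fun N => mzvT R N s).

(* hstar k q = sum_{1 <= l_1 <= ... <= l_q <= k} 1/(l_1 ... l_q) *)
Fixpoint hstar (R : realType) (k q : nat) : R :=
  match q with
  | 0 => 1
  | q'.+1 => \sum_(1 <= l < k.+1) (l%:R)^-1 * hstar R l q'
  end.

(* truncated G_m(p,q): k_{p+1} <= N, with exponent m on k_{p+1} *)
Definition GT (R : realType) (m p q N : nat) : R :=
  \sum_(1 <= k < N.+1)
     (k%:R ^- m) * mzvT_rev R k.-1 (nseq p 1%N) * hstar R k q.

(* G_m(p,q) (the paper writes m = n + 2) *)
Definition G (R : realType) (m p q : nat) : R := limn (fun N => GT R m p q N).

(* Main.v *)
Require Import Defs.
From HB Require Import structures.
From mathcomp Require Import all_boot all_order all_algebra.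
From mathcomp Require Import all_classical all_reals all_analysis.
From mathcomp Require Import ring lra.
Import Order.TTheory GRing.Theory Num.Theory.
Import numFieldNormedType.Exports.
Local Open Scope ring_scope.

Definition ee (R : realType) (j n : nat) : R := mzvT_rev R n (nseq j 1%N).

Lemma ee0 (R : realType) n : ee R 0 n = 1.
Proof. by []. Qed.

Lemma eeS0 (R : realType) j : ee R j.+1 0 = 0.
Proof. by rewrite /ee /= big_geq. Qed.

Lemma eeSS (R : realType) j n :
  ee R j.+1 n.+1 = ee R j.+1 n + (n.+1%:R)^-1 * ee R j n.
Proof. by rewrite /ee /= big_nat_recr //= expr1. Qed.

Lemma ee_ge0 (R : realType) j n : 0 <= ee R j n.
Proof.
elim: j n => [|j IH] n; first by rewrite ee0.
elim: n => [|n IHn]; first by rewrite eeS0.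
by rewrite eeSS addr_ge0 // mulr_ge0 // invr_ge0.
Qed.

Lemma hS0 (R : realType) q : hstar R 0 q.+1 = 0.
Proof. by rewrite /= big_geq. Qed.

Lemma hSS (R : realType) q m :
  hstar R m.+1 q.+1 = hstar R m q.+1 + (m.+1%:R)^-1 * hstar R m.+1 q.
Proof. by rewrite /= big_nat_recr. Qed.

Lemma h_ge0 (R : realType) q m : 0 <= hstar R m q.
Proof.
elim: q m => [|q IH] m; first by [].
elim: m => [|m IHm]; first by rewrite hS0.
by rewrite hSS addr_ge0 // mulr_ge0 // invr_ge0.
Qed.

Definition ZZ (R : realType) (j s N : nat) : R :=
  \sum_(0 <= n < N) (n.+1%:R ^- s) * ee R j n.

Lemma mzvT_ZZ (R : realType) j s N :
  mzvT R N (rcons (nseq j 1%N) s) = ZZ R j s N.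
Proof.
rewrite /mzvT rev_rcons /ZZ /= big_add1 /=.
have -> : rev (nseq j 1%N) = nseq j 1%N.
  by elim: j => //= j IH; rewrite rev_cons IH -cats1 -(nseqD j 1%N 1%N) addn1.
by [].
Qed.

Definition GG (R : realType) (m p q N : nat) : R :=
  \sum_(0 <= n < N) (n.+1%:R ^- m) * ee R p n * hstar R n.+1 q.

Lemma GT_GG (R : realType) m p q N : GT R m p q N = GG R m p q N.
Proof. by rewrite /GT /GG big_add1. Qed.
Lemma dbl (R : realType) m : ((m.*2)%:R : R) = 2 * m%:R.
Proof. by rewrite -mul2n natrM. Qed.

Fixpoint PP (R : realType) (n : nat) : R :=
  match n with 0 => 1 | n'.+1 => PP R n' * (1 + ((n'.+1).*2%:R)^-1) end.

Lemma PP_ge1 (R : realType) n : 1 <= PP R n.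
Proof.
elim: n => [|n IH] //=.
have h : 0 <= ((n.+1).*2%:R : R)^-1 by rewrite invr_ge0.
nra.
Qed.

Lemma ee_le_PP (R : realType) n j : ee R j n <= 2%:R ^+ j * PP R n.
Proof.
elim: n j => [|n IH] [|j].
- by rewrite ee0 /= mulr1.
- by rewrite eeS0 mulr_ge0 // ?exprn_ge0.
- by rewrite ee0 mul1r PP_ge1.
rewrite eeSS /=.
have h1 := IH j.+1; have h2 := IH j.
have hp : 0 < (n.+1%:R : R) by rewrite ltr0n.
have e2 : ((n.+1).*2%:R : R) = 2 * n.+1%:R by rewrite -muln2 natrM mulrC.
rewrite e2 exprS.
have hi : 0 <= (n.+1%:R : R)^-1 by rewrite invr_ge0 ltW.
have -> : (2 * n.+1%:R : R)^-1 = 2^-1 * (n.+1%:R)^-1 by rewrite invfM.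
set x := (n.+1%:R : R)^-1 in hi *.
set a := ee R j.+1 n in h1 *; set b := ee R j n in h2 *.
set P := PP R n in h1 h2 *; set t := (2%:R ^+ j : R) in h1 h2 *.
have ht : 0 <= t by rewrite exprn_ge0.
have -> : (2%:R : R) = 2 by [].
have : x * b <= x * (t * P) by rewrite ler_wpM2l.
rewrite exprS -/t -mulrA in h1.
have -> : 2 * t * (P * (1 + 2^-1 * x)) = 2 * (t * P) + x * (t * P) by field.
nra.
Qed.

Lemma PP_sq (R : realType) n : PP R n ^+ 2 <= (n.*2.+1)%:R.
Proof.
elim: n => [|n IH] /=; first by rewrite expr1n.
have hp : 0 < (n.+1%:R : R) by rewrite ltr0n.
have e2 : ((n.+1).*2%:R : R) = 2 * n.+1%:R by rewrite -muln2 natrM mulrC.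
have e3 : ((n.+1).*2.+1%:R : R) = 2 * n.+1%:R + 1 by rewrite -e2 -addn1 natrD.
have e4 : ((n.*2.+1)%:R : R) = 2 * n.+1%:R - 1.
  by rewrite -e2 -[X in X%:R]addn1 -[in RHS]addn1 -!muln2 !natrD ?natrM; ring.
rewrite e2 e3; rewrite e4 in IH.
set y := (n.+1%:R : R) in hp e2 e3 e4 IH *.
rewrite exprMn.
have -> : (1 + (2 * y)^-1) ^+ 2 = ((2 * y + 1) / (2 * y)) ^+ 2.
  by congr (_ ^+ 2); field; rewrite lt0r_neq0 //; nra.
rewrite expr_div_n.
have hq : 0 < (2 * y) ^+ 2 by rewrite exprn_gt0 //; nra.
rewrite mulrA ler_pdivrMr //.
have hP : 0 <= PP R n ^+ 2 by rewrite sqr_ge0.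
nra.
Qed.

Lemma PP_sum (R : realType) N :
  \sum_(0 <= n < N) PP R n / (n.+1%:R ^+ 2) <= 4.
Proof.
suff H : forall N, \sum_(0 <= n < N.+1) PP R n / (n.+1%:R ^+ 2)
                    + 2 * PP R N.+1 / N.+1%:R <= 4.
  case: N => [|N]; first by rewrite big_geq.
  apply: le_trans (H N); rewrite lerDl mulr_ge0 // ?invr_ge0 //.
  by apply: mulr_ge0 => //; apply: le_trans (PP_ge1 R _).
elim => [|n IH].
  rewrite big_nat1 /= expr1n divr1 !mul1r invr1 mulr1.
  have -> : ((1%N).*2%:R : R) = 2 by [].
  have h : (2 : R)^-1 = 1/2 by rewrite div1r.
  rewrite h; lra.
rewrite big_nat_recr //=.
apply: le_trans IH.
rewrite -addrA lerD2l.
set P := PP R n.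
have hP : 1 <= P := PP_ge1 R n.
have hp : 0 < (n.+1%:R : R) by rewrite ltr0n.
have e2 : ((n.+2).*2%:R : R) = 2 * (n.+1%:R + 1) by rewrite dbl -[n.+2]addn1 natrD.
have e1 : ((n.+1).*2%:R : R) = 2 * n.+1%:R by rewrite dbl.
have e5 : (n.+2%:R : R) = n.+1%:R + 1 by rewrite -[n.+2]addn1 natrD.
rewrite [PP R n.+1]/= -/P e2 e1 e5.
set y := (n.+1%:R : R) in hp *.
rewrite -subr_ge0.
have -> : 2 * (P * (1 + (2 * y)^-1)) / y -
  (P * (1 + (2 * y)^-1) / (y + 1) ^+ 2 +
   2 * (P * (1 + (2 * y)^-1) * (1 + (2 * (y + 1))^-1)) / (y + 1))
  = 2 * (P * (1 + (2 * y)^-1)) / (y * (y + 1) ^+ 2).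
  by field; rewrite ?lt0r_neq0 //; nra.
have hi : 0 <= (2 * y)^-1 by rewrite invr_ge0; nra.
apply: mulr_ge0; first by rewrite mulr_ge0 // mulr_ge0 // ?addr_ge0 //; apply: le_trans hP.
by rewrite invr_ge0; apply: mulr_ge0; nra.
Qed.

Lemma ZZ_bound (R : realType) j s N : (2 <= s)%N ->
  ZZ R j s N <= 2%:R ^+ j * 4.
Proof.
move=> hs; rewrite /ZZ.
apply: le_trans (_ : 2%:R ^+ j * \sum_(0 <= n < N) PP R n / (n.+1%:R ^+ 2) <= _);
  last by rewrite ler_wpM2l ?exprn_ge0 // PP_sum.
rewrite mulr_sumr; apply: ler_sum => n _.
have hp : 1 <= (n.+1%:R : R) by rewrite ler1n.
have h1 : n.+1%:R ^- s <= (n.+1%:R ^+ 2 : R)^-1.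
  rewrite lef_pV2 ?posrE ?exprn_gt0 //; try lra.
  by apply: ler_weXn2l; [lra | exact: hs].
have -> : 2%:R ^+ j * (PP R n / n.+1%:R ^+ 2) =
  (n.+1%:R ^+ 2 : R)^-1 * (2%:R ^+ j * PP R n) by ring.
by rewrite ler_pM // ?invr_ge0 ?exprn_ge0 ?ee_ge0 ?ee_le_PP.
Qed.

Lemma ZZ_ge0 (R : realType) j s N : 0 <= ZZ R j s N.
Proof.
rewrite /ZZ; apply: sumr_ge0 => n _; apply: mulr_ge0; last exact: ee_ge0.
by rewrite invr_ge0 exprn_ge0.
Qed.
Definition FF (R : realType) (j N : nat) (x : R) : R :=
  \sum_(0 <= n < N) ee R j n / ((n%:R + 1) * (n%:R + 1 + x)).

Definition DD (R : realType) (j N m : nat) : R :=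
  hstar R m j.+1 - m%:R * FF R j N m%:R.

Lemma natS (R : realType) n : (n.+1%:R : R) = n%:R + 1.
Proof. by rewrite -[n.+1]addn1 natrD. Qed.

Ltac nz := rewrite ?lt0r_neq0 //; lra.

Lemma keyA (R : realType) j N m :
  \sum_(0 <= n < N.+1) ee R j.+1 n *
     ((n%:R + m%:R + 1)^-1 - (n%:R + m%:R + 2)^-1)
  = \sum_(0 <= n < N) ee R j n / ((n%:R + 1) * (n%:R + m%:R + 2))
    - ee R j.+1 N / (N%:R + m%:R + 2).
Proof.
elim: N => [|N IH].
  by rewrite big_nat1 big_geq // eeS0 !mul0r subr0.
rewrite big_nat_recr //= IH big_nat_recr //= eeSS natS.
have ha : 0 <= (N%:R : R) by [].
have hb : 0 <= (m%:R : R) by [].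
set a := (N%:R : R) in ha *; set b := (m%:R : R) in hb *.
field; repeat split; nz.
Qed.

Lemma keyB (R : realType) N m :
  \sum_(0 <= n < N) ((n%:R + m%:R + 1)^-1 - (n%:R + m%:R + 2 : R)^-1)
  = (m%:R + 1)^-1 - (N%:R + m%:R + 1)^-1.
Proof.
elim: N => [|N IH]; first by rewrite big_geq // add0r subrr.
rewrite big_nat_recr //= IH natS.
have ha : 0 <= (N%:R : R) by [].
have hb : 0 <= (m%:R : R) by [].
set a := (N%:R : R) in ha *; set b := (m%:R : R) in hb *.
field; repeat split; nz.
Qed.

Lemma FF_diff (R : realType) j N m :
  (m.+1%:R) * FF R j N m.+1%:R - m%:R * FF R j N m%:R =
  \sum_(0 <= n < N) ee R j n *
     ((n%:R + m%:R + 1)^-1 - (n%:R + m%:R + 2)^-1).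
Proof.
rewrite /FF !mulr_sumr -sumrB; apply: eq_bigr => n _.
rewrite natS.
have ha : 0 <= (n%:R : R) by [].
have hb : 0 <= (m%:R : R) by [].
set a := (n%:R : R) in ha *; set b := (m%:R : R) in hb *.
field; repeat split; nz.
Qed.

Lemma DD0 (R : realType) j N : DD R j N 0 = 0.
Proof. by rewrite /DD hS0 mul0r subr0. Qed.

Lemma DD_base (R : realType) N m :
  DD R 0 N m = \sum_(0 <= i < m) (N%:R + i%:R + 1)^-1.
Proof.
elim: m => [|m IH]; first by rewrite DD0 big_geq.
rewrite big_nat_recr //= -IH /DD hSS /=.
have H : m.+1%:R * FF R 0 N m.+1%:R - m%:R * FF R 0 N m%:R =
  (m%:R + 1)^-1 - (N%:R + m%:R + 1)^-1.
  by rewrite FF_diff -keyB; apply: eq_bigr => n _; rewrite ee0 mul1r.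
have -> : m.+1%:R * FF R 0 N m.+1%:R =
   m%:R * FF R 0 N m%:R + ((m%:R + 1)^-1 - (N%:R + m%:R + 1)^-1).
  by rewrite -H; ring.
rewrite natS.
have ha : 0 <= (N%:R : R) by [].
have hb : 0 <= (m%:R : R) by [].
set a := (N%:R : R) in ha *; set b := (m%:R : R) in hb *.
field; repeat split; nz.
Qed.

Lemma DD_step (R : realType) j N m :
  DD R j.+1 N.+1 m.+1 = DD R j.+1 N.+1 m + DD R j N m.+1 / (m%:R + 1)
     + ee R j.+1 N / (N%:R + m%:R + 2).
Proof.
rewrite /DD hSS.
have := FF_diff R j.+1 N.+1 m; rewrite keyA => H.
have -> : m.+1%:R * FF R j.+1 N.+1 m.+1%:R = m%:R * FF R j.+1 N.+1 m%:R +
  (\sum_(0 <= n < N) ee R j n / ((n%:R + 1) * (n%:R + m%:R + 2))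
    - ee R j.+1 N / (N%:R + m%:R + 2)) by rewrite -H; ring.
have -> : \sum_(0 <= n < N) ee R j n / ((n%:R + 1) * (n%:R + m%:R + 2))
   = FF R j N m.+1%:R.
  rewrite /FF; apply: eq_bigr => n _; rewrite natS; congr (_ / (_ * _)); ring.
rewrite natS.
have hb : 0 <= (m%:R : R) by [].
set b := (m%:R : R) in hb *.
field; nz.
Qed.
Fixpoint cc (R : realType) (j N : nat) : R :=
  match j with
  | 0 => (N%:R + 1)^-1
  | j'.+1 => cc R j' N + ee R j'.+1 (N + j') / ((N + j')%:R + 2)
  end.

Lemma cc_ge0 (R : realType) j N : 0 <= cc R j N.
Proof.
elim: j => [|j IH] /=; first by rewrite invr_ge0 addr_ge0.
by rewrite addr_ge0 // mulr_ge0 ?ee_ge0 // invr_ge0 addr_ge0.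
Qed.

Lemma DD_bound (R : realType) j N m :
  0 <= DD R j (N + j) m <= m%:R * cc R j N.
Proof.
elim: j N m => [|j IH] N m.
  rewrite addn0 DD_base /=; apply/andP; split.
    by apply: sumr_ge0 => i _; rewrite invr_ge0 addr_ge0 // addr_ge0.
  apply: le_trans (_ : \sum_(0 <= i < m) (N%:R + 1 : R)^-1 <= _).
    apply: ler_sum => i _.
    have := ler0n R N; have := ler0n R i => h1 h2.
    by rewrite lef_pV2 ?posrE; lra.
  by rewrite sumr_const_nat subn0 mulr_natl.
rewrite addnS.
elim: m => [|m IHm]; first by rewrite DD0 mul0r lexx.
rewrite DD_step.
move: IHm => /andP[h1 h2].
have /andP[h3 h4] := IH N m.+1.
have hm : 0 < (m%:R + 1 : R) by have := ler0n R m; lra.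
have hc := cc_ge0 R j N.
have he := ee_ge0 R j.+1 (N + j).
have hx : 0 <= ((N + j)%:R : R) by [].
have hb : 0 <= (m%:R : R) by [].
have h5 : DD R j (N + j) m.+1 / (m%:R + 1) <= cc R j N.
  by rewrite ler_pdivrMr // mulrC -natS.
have h6 : ee R j.+1 (N + j) / ((N + j)%:R + m%:R + 2)
          <= ee R j.+1 (N + j) / ((N + j)%:R + 2).
  by rewrite ler_wpM2l // lef_pV2 ?posrE; try lra.
have h7 : 0 <= DD R j (N + j) m.+1 / (m%:R + 1) by rewrite divr_ge0 // ltW.
have h8 : 0 <= ee R j.+1 (N + j) / ((N + j)%:R + m%:R + 2).
  by rewrite divr_ge0 //; lra.
rewrite /= natS.
set X := ee R j.+1 (N + j) / ((N + j)%:R + 2) in h6 *.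
apply/andP; split; first by lra.
rewrite /= -/X in h2.
lra.
Qed.
Ltac nzs := repeat (apply/andP; split); apply: lt0r_neq0; lra.

Lemma Sk (R : realType) (x y : R) k : 0 < x -> 0 < y ->
  \sum_(0 <= a < k.+1) (-1) ^+ (k - a) * (x ^- (a + 2)) * (y ^- (k - a + 2)) =
  x ^- (k + 2) / (y * (x + y)) + (-1) ^+ k * y ^- (k + 2) / (x * (x + y)).
Proof.
move=> hx hy.
elim: k => [|k IH].
  rewrite big_nat1 subn0 add0n expr0 !mul1r !expr2.
  field. nzs.
rewrite big_nat_recr //=.
have -> : \sum_(0 <= i < k.+1) (-1) ^+ (k.+1 - i) * x ^- (i + 2) * y ^- (k.+1 - i + 2)
   = - y^-1 * \sum_(0 <= i < k.+1) (-1) ^+ (k - i) * x ^- (i + 2) * y ^- (k - i + 2).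
  rewrite mulr_sumr big_nat [RHS]big_nat; apply: eq_bigr => i /andP[_ hi].
  rewrite subSn // exprS addSn exprS invfM; ring.
rewrite IH subnn add0n !addSn !exprS !invfM.
have hX : 0 < x ^+ (k + 2) by rewrite exprn_gt0.
have hY : 0 < y ^+ (k + 2) by rewrite exprn_gt0.
set X := x ^+ (k + 2) in hX *; set Y := y ^+ (k + 2) in hY *.
rewrite expr0 invr1 !mulr1 !mul1r.
field. nzs.
Qed.

Definition RS (R : realType) (P Q k M : nat) : R :=
  \sum_(0 <= a < k.+1) (-1) ^+ (k - a) * ZZ R P (a + 2) M * ZZ R Q (k - a + 2) M.

Lemma prod_id (R : realType) P Q k M :
  RS R P Q k M =
  \sum_(0 <= m < M) ee R P m * (m.+1%:R ^- (k + 2)) * FF R Q M m.+1%:R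
  + (-1) ^+ k * \sum_(0 <= n < M) ee R Q n * (n.+1%:R ^- (k + 2)) * FF R P M n.+1%:R.
Proof.
have step1 : RS R P Q k M = \sum_(0 <= m < M) \sum_(0 <= n < M)
   ee R P m * ee R Q n * \sum_(0 <= a < k.+1)
     (-1) ^+ (k - a) * (m.+1%:R ^- (a + 2)) * (n.+1%:R ^- (k - a + 2)).
  rewrite /RS /ZZ.
  transitivity (\sum_(0 <= a < k.+1) \sum_(0 <= m < M) \sum_(0 <= n < M)
     (-1) ^+ (k - a) * (m.+1%:R ^- (a + 2) * ee R P m) *
       (n.+1%:R ^- (k - a + 2) * ee R Q n)).
    apply: eq_bigr => a _; rewrite -mulrA mulr_suml mulr_sumr; apply: eq_bigr => m _.
    by rewrite mulrA mulr_sumr.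
  rewrite exchange_big; apply: eq_bigr => m _.
  rewrite exchange_big; apply: eq_bigr => n _.
  rewrite mulr_sumr; apply: eq_bigr => a _; ring.
rewrite step1 /FF !mulr_sumr.
under [X in _ = _ + X]eq_bigr => n _ do rewrite !mulr_sumr.
rewrite [X in _ = _ + X]exchange_big -big_split; apply: eq_bigr => m _.
rewrite mulr_sumr -big_split; apply: eq_bigr => n _ /=.
have hx : 0 < (m.+1%:R : R) by rewrite ltr0n.
have hy : 0 < (n.+1%:R : R) by rewrite ltr0n.
rewrite Sk // !natS.
rewrite !natS in hx hy.
set x := (m%:R : R) in hx *; set y := (n%:R : R) in hy *.
have hX : 0 < (x + 1) ^+ (k + 2) by rewrite exprn_gt0.
have hY : 0 < (y + 1) ^+ (k + 2) by rewrite exprn_gt0.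
set X := (x + 1) ^+ (k + 2) in hX *; set Y := (y + 1) ^+ (k + 2) in hY *.
field. nzs.
Qed.
Definition ER (R : realType) (P Q k M : nat) : R :=
  \sum_(0 <= m < M) m.+1%:R ^- (k + 3) * ee R P m * DD R Q M m.+1.

Lemma GG_split (R : realType) P Q k M :
  GG R (k + 3) P Q.+1 M = ER R P Q k M +
  \sum_(0 <= m < M) ee R P m * (m.+1%:R ^- (k + 2)) * FF R Q M m.+1%:R.
Proof.
rewrite /GG /ER.
rewrite (eq_bigr (fun m => m.+1%:R ^- (k + 3) * ee R P m * DD R Q M m.+1 +
   ee R P m * (m.+1%:R ^- (k + 2)) * FF R Q M m.+1%:R)); first exact: big_split.
move=> m _.
have -> : hstar R m.+1 Q.+1 = DD R Q M m.+1 + m.+1%:R * FF R Q M m.+1%:R.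
  by rewrite /DD subrK.
have hx : 0 < (m.+1%:R : R) by rewrite ltr0n.
have -> : (k + 3 = (k + 2).+1)%N by rewrite addnS.
rewrite exprS invfM.
have hX : 0 < (m.+1%:R : R) ^+ (k + 2) by rewrite exprn_gt0.
set X := (m.+1%:R : R) ^+ (k + 2) in hX *.
set x := (m.+1%:R : R) in hx *.
field. nzs.
Qed.

Lemma finite_id (R : realType) P Q k M :
  GG R (k + 3) P Q.+1 M + (-1) ^+ k * GG R (k + 3) Q P.+1 M =
  RS R P Q k M + (ER R P Q k M + (-1) ^+ k * ER R Q P k M).
Proof. rewrite !GG_split prod_id; ring. Qed.

Lemma ER_bound (R : realType) P Q k N :
  0 <= ER R P Q k (N + Q) <= cc R Q N * (2%:R ^+ P * 4).
Proof.
have hc := cc_ge0 R Q N.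
apply/andP; split.
  apply: sumr_ge0 => m _; apply: mulr_ge0; last by case/andP: (DD_bound R Q N m.+1).
  by apply: mulr_ge0; rewrite ?invr_ge0 ?exprn_ge0 ?ee_ge0.
apply: le_trans (_ : cc R Q N * ZZ R P (k + 2) (N + Q) <= _); last first.
  by rewrite ler_wpM2l // ZZ_bound // addn2.
rewrite /ER /ZZ mulr_sumr; apply: ler_sum => m _.
have /andP[h1 h2] := DD_bound R Q N m.+1.
have hx : 0 < (m.+1%:R : R) by rewrite ltr0n.
have he := ee_ge0 R P m.
have -> : (k + 3 = (k + 2).+1)%N by rewrite addnS.
rewrite exprS invfM.
have hX : 0 < (m.+1%:R : R) ^+ (k + 2) by rewrite exprn_gt0.
set X := (m.+1%:R : R) ^+ (k + 2) in hX *.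
set x := (m.+1%:R : R) in hx h2 *.
set D := DD R Q (N + Q) m.+1 in h1 h2 *.
have hXi : 0 < X^-1 by rewrite invr_gt0.
have hxi : 0 < x^-1 by rewrite invr_gt0.
have -> : cc R Q N * (X^-1 * ee R P m) = (x^-1 * X^-1 * ee R P m) * (x * cc R Q N).
  by field; nzs.
by rewrite ler_wpM2l // mulr_ge0 // mulr_ge0 // ltW.
Qed.

Lemma PP_le (R : realType) n : PP R n <= n%:R + 2.
Proof.
have h := PP_sq R n; have h1 := PP_ge1 R n.
rewrite -[n.*2.+1]addn1 -muln2 natrD natrM in h.
have := ler0n R n; nra.
Qed.

Lemma ee_div_le (R : realType) i n : ee R i n / (n%:R + 2) <= 2%:R ^+ i.
Proof.
have hn : 0 < (n%:R + 2 : R) by have := ler0n R n; lra.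
rewrite ler_pdivrMr //.
apply: le_trans (ee_le_PP R n i) _.
by rewrite ler_wpM2l ?exprn_ge0 // PP_le.
Qed.

Lemma cc_le (R : realType) j N : cc R j N <= 2%:R ^+ j.+1.
Proof.
elim: j => [|j IH] /=.
  rewrite expr1; have := ler0n R N => h.
  have : (N%:R + 1 : R)^-1 <= 1 by rewrite invf_le1; lra.
  lra.
have := ee_div_le R j.+1 (N + j).
rewrite [2%:R ^+ j.+2]exprS [2%:R ^+ j.+1]exprS in IH *.
have -> : (2%:R : R) = 2 by [].
lra.
Qed.
Local Open Scope classical_set_scope.
Lemma sq_cvg0 (R : realType) (u : nat -> R) (C : R) :
  (forall N, 0 <= u N) -> (forall N, u N ^+ 2 <= C * (N.+1%:R)^-1) ->
  u @ \oo --> 0.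
Proof.
move=> u0 uC; apply/cvgr0Pnorm_lt => e e0.
have hc : (fun N => C * harmonic N) @ \oo --> C * 0.
  exact: cvgMl_tmp cvg_harmonic.
rewrite mulr0 in hc.
have e2 : 0 < e ^+ 2 by rewrite exprn_gt0.
near=> N.
have h := uC N.
have : `|C * harmonic N| < e ^+ 2 by near: N; exact: cvgr0_norm_lt.
move=> hl; rewrite [`|u N|]ger0_norm ?u0 //.
rewrite /harmonic /= in hl.
have hle : C * (N.+1%:R)^-1 <= `|C * (N.+1%:R)^-1| := ler_norm _.
rewrite !expr2 in h hl.
have hlt : u N * u N < e * e := le_lt_trans h (le_lt_trans hle hl).
rewrite ltNge; apply/negP => H.
by have := ler_pM (ltW e0) (ltW e0) H H; rewrite leNgt hlt.
Unshelve. all: by end_near.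
Qed.

Lemma cc_cvg0 (R : realType) j : cc R j @ \oo --> 0.
Proof.
elim: j => [|j IH] /=.
  have -> : (fun N => (N%:R + 1 : R)^-1) = harmonic.
    by apply: funext => N; rewrite /harmonic /= natS.
  exact: cvg_harmonic.
rewrite -[0 : R]addr0.
apply: cvgD => //.
apply: (@sq_cvg0 R _ ((2%:R ^+ j.+1) ^+ 2 * 2)).
  by move=> N; rewrite divr_ge0 ?ee_ge0 //; have := ler0n R (N + j); lra.
move=> N.
set n := (N + j)%N.
have hbn : (N%:R : R) <= n%:R by rewrite ler_nat leq_addr.
have hb := ler0n R N.
have h1 := ee_le_PP R n j.+1.
have h2 := PP_sq R n.
have h3 := PP_ge1 R n.
have he := ee_ge0 R j.+1 n.
have ht : 0 <= (2%:R ^+ j.+1 : R) by rewrite exprn_ge0.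
rewrite -[n.*2.+1]addn1 -muln2 natrD natrM in h2.
set t := (2%:R ^+ j.+1 : R) in h1 ht *.
set e := ee R j.+1 n in h1 he *.
set P := PP R n in h1 h2 h3 *.
set a := (n%:R : R) in hbn h2 *.
rewrite natS.
set b := (N%:R : R) in hbn hb *.
have hE : e * e <= t * t * (a * 2 + 1).
  have h4 : e * e <= (t * P) * (t * P) by nra.
  apply: le_trans h4 _.
  have h5 : P * P <= a * 2 + 1 by rewrite -expr2.
  have h6 : 0 <= t * t by nra.
  have -> : (t * P) * (t * P) = (t * t) * (P * P) by ring.
  by rewrite ler_wpM2l.
have ha2 : 0 < a + 2 by lra.
have hb1 : 0 < b + 1 by lra.
have key : e * e * (b + 1) <= t * t * 2 * ((a + 2) * (a + 2)).
  have := ler_wpM2r (ltW hb1) hE.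
  have h6 : 0 <= t * t by nra.
  nra.
have -> : (e / (a + 2)) ^+ 2 = e * e * (b + 1) * ((a + 2) * (a + 2) * (b + 1))^-1.
  by field; nzs.
rewrite (natS R N) -/b.
apply: le_trans (_ : _ <= t * t * 2 * ((a + 2) * (a + 2)) * ((a + 2) * (a + 2) * (b + 1))^-1) _.
  by rewrite ler_wpM2r // invr_ge0; nra.
rewrite le_eqVlt; apply/orP; left; apply/eqP.
by field; nzs.
Qed.
Lemma nd_sum (R : realType) (f : nat -> R) : (forall n, 0 <= f n) ->
  nondecreasing_seq (fun N => \sum_(0 <= n < N) f n).
Proof.
move=> f0 a b ab /=.
rewrite (big_cat_nat (leq0n a) ab) /= lerDl.
by apply: sumr_ge0 => n _.
Qed.

Lemma ZZ_cvg (R : realType) j s : (2 <= s)%N ->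
  ZZ R j s @ \oo --> limn (ZZ R j s).
Proof.
move=> hs; apply: nondecreasing_is_cvgn.
  apply: nd_sum => n; apply: mulr_ge0; last exact: ee_ge0.
  by rewrite invr_ge0 exprn_ge0.
by exists (2%:R ^+ j * 4) => _ [N _ <-]; exact: ZZ_bound.
Qed.

Lemma FF_le (R : realType) j M (x : R) : 0 <= x -> FF R j M x <= 2%:R ^+ j * 4.
Proof.
move=> hx; apply: le_trans _ (ZZ_bound R j 2 M (leqnn 2)).
rewrite /FF /ZZ; apply: ler_sum => n _.
have he := ee_ge0 R j n.
have hn := ler0n R n.
by rewrite mulrC ler_wpM2r // natS lef_pV2 ?posrE ?expr2; nra.
Qed.

Lemma GG_ge0 (R : realType) m P Q n : 0 <= GG R m P Q n.
Proof.
apply: sumr_ge0 => i _; apply: mulr_ge0; last exact: h_ge0.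
by apply: mulr_ge0; rewrite ?invr_ge0 ?exprn_ge0 ?ee_ge0.
Qed.

Lemma GG_cvg (R : realType) P Q k :
  GG R (k + 3) P Q.+1 @ \oo --> limn (GG R (k + 3) P Q.+1).
Proof.
have nd : nondecreasing_seq (GG R (k + 3) P Q.+1).
  apply: nd_sum => n; apply: mulr_ge0; last exact: h_ge0.
  by apply: mulr_ge0; rewrite ?invr_ge0 ?exprn_ge0 ?ee_ge0.
apply: nondecreasing_is_cvgn => //.
exists (2%:R ^+ Q.+1 * (2%:R ^+ P * 4) + (2%:R ^+ Q * 4) * (2%:R ^+ P * 4)).
move=> _ [M _ <-].
apply: le_trans (nd M (M + Q)%N (leq_addr _ _)) _.
rewrite GG_split.
have /andP[_ h1] := ER_bound R P Q k M.
have h2 := cc_le R Q M.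
have hC : 0 <= (2%:R ^+ P * 4 : R) by rewrite mulr_ge0 ?exprn_ge0.
apply: lerD.
  by apply: le_trans h1 _; rewrite ler_wpM2r.
apply: le_trans (_ : (2%:R ^+ Q * 4) * ZZ R P (k + 2) (M + Q) <= _); last first.
  by rewrite ler_wpM2l ?mulr_ge0 ?exprn_ge0 // ZZ_bound // addn2.
rewrite /ZZ mulr_sumr; apply: ler_sum => m _.
have hF := @FF_le R Q (M + Q) m.+1%:R (ler0n R m.+1).
have hF0 : 0 <= FF R Q (M + Q) m.+1%:R.
  apply: sumr_ge0 => n _; rewrite divr_ge0 ?ee_ge0 //.
have hw : 0 <= ee R P m * m.+1%:R ^- (k + 2).
  by rewrite mulr_ge0 ?ee_ge0 // invr_ge0 exprn_ge0.
rewrite [X in _ <= X]mulrC [m.+1%:R ^- (k + 2) * _]mulrC.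
by rewrite ler_wpM2l.
Qed.

Lemma ER_cvg0 (R : realType) P Q k : ER R P Q k @ \oo --> 0.
Proof.
rewrite -(cvg_shiftn Q).
apply: (@squeeze_cvgr _ _ _ _ (fun=> 0) (fun N => cc R Q N * (2%:R ^+ P * 4))).
- by near=> N; exact: ER_bound.
- exact: cvg_cst.
- rewrite -(mul0r (2%:R ^+ P * 4 : R)).
  exact: cvgMr_tmp (cc_cvg0 R Q).
Unshelve. all: by end_near.
Qed.

Lemma sum_cvg (R : realType) (n : nat) (f : nat -> nat -> R) (l : nat -> R) :
  (forall a, f a @ \oo --> l a) ->
  (fun M => \sum_(0 <= a < n) f a M) @ \oo --> \sum_(0 <= a < n) l a.
Proof.
move=> H; elim: n => [|n IH].
  under eq_fun do rewrite big_geq //.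
  by rewrite big_geq //; exact: cvg_cst.
under eq_fun do rewrite big_nat_recr //=.
rewrite big_nat_recr //=.
exact: cvgD IH (H n).
Qed.
Theorem proposition2p4 (R : realType) (p q k : nat) (hp : (0 < p)%N) (hq : (0 < q)%N) :
  G R (k + 3) (p - 1) q + (-1) ^+ k * G R (k + 3) (q - 1) p =
  \sum_(a < k.+1)
     (-1) ^+ (k - a) * mzv R (rcons (nseq (p - 1) 1%N) (a + 2)%N)
                     * mzv R (rcons (nseq (q - 1) 1%N) ((k - a) + 2)%N).
Proof.
case: p hp => // P _; case: q hq => // Q _.
rewrite !subn1 /=.
have eG : forall P Q, G R (k + 3) P Q.+1 = limn (GG R (k + 3) P Q.+1).
  by move=> P' Q'; rewrite /G; congr (limn _); apply: funext => N; exact: GT_GG.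
have eZ : forall j s, mzv R (rcons (nseq j 1%N) s) = limn (ZZ R j s).
  by move=> j s; rewrite /mzv; congr (limn _); apply: funext => N; exact: mzvT_ZZ.
rewrite !eG -(big_mkord xpredT (fun a => (-1) ^+ (k - a) *
   mzv R (rcons (nseq P 1%N) (a + 2)%N) * mzv R (rcons (nseq Q 1%N) (k - a + 2)%N))).
under eq_bigr do rewrite !eZ.
set s := ((-1) ^+ k : R).
have H1 : (fun M => GG R (k + 3) P Q.+1 M + s * GG R (k + 3) Q P.+1 M) @ \oo -->
   limn (GG R (k + 3) P Q.+1) + s * limn (GG R (k + 3) Q P.+1).
  apply: cvgD; first exact: GG_cvg.
  exact: cvgMl_tmp (GG_cvg R Q P k).
have H2 : (fun M => GG R (k + 3) P Q.+1 M + s * GG R (k + 3) Q P.+1 M) @ \oo -->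
   \sum_(0 <= i < k.+1) (-1) ^+ (k - i) * limn (ZZ R P (i + 2)) *
        limn (ZZ R Q (k - i + 2)) + (0 + s * 0).
  under eq_fun do rewrite finite_id.
  apply: cvgD.
    rewrite /RS.
    apply: (@sum_cvg R k.+1 (fun a M => (-1) ^+ (k - a) * ZZ R P (a + 2) M *
                                           ZZ R Q (k - a + 2) M)) => a.
    apply: cvgM; last by apply: ZZ_cvg; rewrite addn2.
    apply: cvgM; first exact: cvg_cst.
    by apply: ZZ_cvg; rewrite addn2.
  apply: cvgD; first exact: ER_cvg0.
  exact: cvgMl_tmp (ER_cvg0 R Q P k).
rewrite mulr0 addr0 addr0 in H2.
have E1 := cvg_lim (@Rhausdorff R) H1.
have E2 := cvg_lim (@Rhausdorff R) H2.
by rewrite -E1 E2.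
Qed.
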